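(* Let $(X,\rho)$ be a metric space and let $f,g$ be unbounded moduli. Then for all $A,B\in CL(X)$ and every sequence $(A_k)\subset CL(X)$, if $(A_k)$ is $f$-Wijsman statistically convergent to $A$ and $g$-Wijsman statistically convergent to $B$, then $A=B$.
   Context: A modulus is a function $f\colon[0,\infty)\to[0,\infty)$ such that $f(x)=0$ iff $x=0$, $f$ is subadditive, increasing and continuous. $CL(X)$ denotes the set of all non-empty closed subsets of $(X,\rho)$, and $d(x,B)=\inf_{y\in B}\rho(x,y)$. For an unbounded modulus $f$ and $K\subseteq\mathbb N$, the $f$-density is $d^f(K)=\lim_{n\to\infty}\frac{f(|\{k\le n:k\in K\}|)}{f(n)}$ (when the limit exists). A real sequence $(x_k)$ is $f$-statistically convergent to $l$ if for every $\varepsilon>0$ the set $\{k:|x_k-l|\ge\varepsilon\}$ has $f$-density $0$. $(A_k)\subset CL(X)$ is $f$-Wijsman statistically convergent to $A\in CL(X)$ if for every $x\in X$ the sequence $(d(x,A_k))$ is $f$-statistically convergent to $d(x,A)$. *)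

(* Defs.v *)
From HB Require Import structures.
From mathcomp Require Import all_boot all_order all_algebra.
From mathcomp Require Import all_classical all_reals all_analysis.
Set Implicit Arguments. Unset Strict Implicit. Unset Printing Implicit Defensive.
Import Order.TTheory GRing.Theory Num.Theory.
Import numFieldNormedType.Exports.
Local Open Scope classical_set_scope.
Local Open Scope ring_scope.

Definition is_metric (R : realType) (X : Type) (rho : X -> X -> R) : Prop :=
  (forall x y, 0 <= rho x y) /\
  (forall x y, rho x y = 0 <-> x = y) /\
  (forall x y, rho x y = rho y x) /\
  (forall x y z, rho x z <= rho x y + rho y z).

Definition mclosed (R : realType) (X : Type) (rho : X -> X -> R) (A : set X) : Prop :=
  forall x, ~ A x -> exists2 r : R, 0 < r & forall y, rho x y < r -> ~ A y.

Definition CL (R : realType) (X : Type) (rho : X -> X -> R) (A : set X) : Prop :=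
  A !=set0 /\ mclosed rho A.

Definition dist (R : realType) (X : Type) (rho : X -> X -> R) (x : X) (B : set X) : R :=
  inf [set rho x y | y in B].

(* modulus f : [0,oo) -> [0,oo) (represented as f : R -> R, conditions on [0,oo)) *)
Definition modulus (R : realType) (f : R -> R) : Prop :=
  (forall x, 0 <= x -> 0 <= f x) /\
  (forall x, 0 <= x -> (f x = 0 <-> x = 0)) /\
  (forall x y, 0 <= x -> 0 <= y -> f (x + y) <= f x + f y) /\
  (forall x y, 0 <= x -> x <= y -> f x <= f y) /\
  {within [set x : R | 0 <= x], continuous f}.

Definition unbounded_modulus (R : realType) (f : R -> R) : Prop :=
  modulus f /\ (forall M : R, exists2 x : R, 0 <= x & M < f x).

(* K subset of N = {1,2,...} (given as a boolean predicate) has f-density 0: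
   lim_n f(|{k <= n : k in K}|) / f(n) exists and equals 0 *)
Definition fdensity_zero (R : realType) (f : R -> R) (K : nat -> bool) : Prop :=
  (fun n : nat => f (count K (iota 1 n))%:R / f n%:R) @ \oo --> (0 : R).

Definition fstat_cvg (R : realType) (f : R -> R) (x : nat -> R) (l : R) : Prop :=
  forall eps : R, 0 < eps -> fdensity_zero f (fun k => eps <= `|x k - l|).

Definition fWijsman_stat_cvg (R : realType) (X : Type) (rho : X -> X -> R)
  (f : R -> R) (Ak : nat -> set X) (A : set X) : Prop :=
  forall x : X, fstat_cvg f (fun k => dist rho x (Ak k)) (dist rho x A).

(* Main.v *)
Require Import Defs.
From mathcomp Require Import all_boot all_order all_algebra.
From mathcomp Require Import all_classical all_reals all_analysis.
From mathcomp Require Import ring lra zify.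
Import Order.TTheory GRing.Theory Num.Theory.
Import numFieldNormedType.Exports.
Local Open Scope classical_set_scope.
Local Open Scope ring_scope.

Lemma ratio_half (R : realType) (f : R -> R) (hf : modulus f) (n c : nat) :
  (1 <= n)%N -> (n <= 2 * c)%N -> 1/2 <= f c%:R / f n%:R.
Proof.
case: hf => [f0 [fz [fs [fm _]]]] n1 nc.
have fn0 : 0 < f n%:R.
  rewrite lt0r f0 ?ler0n // andbT; apply/eqP => /(fz _ (ler0n _ _)).
  by move/eqP; rewrite pnatr_eq0 => /eqP nz; rewrite nz in n1.
have h1 : f n%:R <= f (c%:R + c%:R).
  by apply: fm; rewrite ?ler0n // -natrD ler_nat addnn -mul2n.
have h2 := fs _ _ (ler0n R c) (ler0n R c).
rewrite ler_pdivlMr //; lra.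
Qed.

Lemma dens_contra (R : realType) (f g : R -> R) (hf : modulus f) (hg : modulus g)
  (K1 K2 : nat -> bool) : (forall k, K1 k || K2 k) ->
  fdensity_zero f K1 -> fdensity_zero g K2 -> False.
Proof.
move=> hK c1 c2.
have e : (0 : R) < 1/2 by lra.
have H1 : \forall t \near \oo, `|f (count K1 (iota 1 t))%:R / f t%:R| < 1/2 := cvgr0_norm_lt _ c1 _ e.
have H2 : \forall t \near \oo, `|g (count K2 (iota 1 t))%:R / g t%:R| < 1/2 := cvgr0_norm_lt _ c2 _ e.
have H3 : \forall n \near \oo, (1 <= n)%N by exists 1%N.
have [n [[a b] d]] := filter_ex (filterI (filterI (H1 eventually_filter) (H2 eventually_filter)) H3).
have hc : (count K1 (iota 1 n) + count K2 (iota 1 n) >= n)%N.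
  rewrite -count_predUI.
  have -> : count (predU K1 K2) (iota 1 n) = n.
    have : all (predU K1 K2) (iota 1 n) by apply/allP => k _; exact: hK.
    by rewrite all_count size_iota => /eqP.
  by rewrite leq_addr.
have [h|h] : (n <= 2 * count K1 (iota 1 n))%N \/ (n <= 2 * count K2 (iota 1 n))%N by lia.
- have := @ratio_half _ _ hf _ _ d h; move: a; rewrite ger0_norm.
    by move=> ? ?; lra.
  case: hf => f0 _; apply: divr_ge0; apply: f0; exact: ler0n.
- have := @ratio_half _ _ hg _ _ d h; move: b; rewrite ger0_norm.
    by move=> ? ?; lra.
  case: hg => f0 _; apply: divr_ge0; apply: f0; exact: ler0n.
Qed.

Section D.
Variables (R : realType) (X : Type) (rho : X -> X -> R) (hrho : is_metric rho).

Lemma dist_lb (B : set X) (x : X) : has_lbound [set rho x y | y in B].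
Proof. exists 0 => _ [y _ <-]; case: hrho => h _; exact: h. Qed.

Lemma dist_ge0 (B : set X) x : CL rho B -> 0 <= dist rho x B.
Proof.
case=> [[y By] _]; apply: lb_le_inf; first by exists (rho x y), y.
by move=> _ [z _ <-]; case: hrho => h _; exact: h.
Qed.

Lemma dist_in (B : set X) x : CL rho B -> B x -> dist rho x B = 0.
Proof.
move=> hB Bx; apply/eqP; rewrite eq_le dist_ge0 // andbT.
have := ge_inf (dist_lb B x) (ex_intro2 _ _ x Bx erefl).
by case: hrho => _ [h _]; rewrite (proj2 (h x x) erefl).
Qed.

Lemma dist0_in (B : set X) x : CL rho B -> dist rho x B = 0 -> B x.
Proof.
move=> hB d0; apply: contrapT => nB.
have [r r0 hr] := proj2 hB x nB.
have : r <= dist rho x B.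
  apply: lb_le_inf; first by case: hB => [[y By] _]; exists (rho x y), y.
  move=> _ [y By <-]; rewrite leNgt; apply/negP => /hr; exact.
by rewrite d0; move: r0; rewrite ltNge => /negP.
Qed.
End D.

Theorem theorem2p3 (R : realType) (X : Type) (rho : X -> X -> R)
  (hrho : is_metric rho) (f g : R -> R)
  (hf : unbounded_modulus f) (hg : unbounded_modulus g)
  (A B : set X) (Ak : nat -> set X)
  (hA : CL rho A) (hB : CL rho B) (hAk : forall k, CL rho (Ak k)) :
  fWijsman_stat_cvg rho f Ak A -> fWijsman_stat_cvg rho g Ak B -> A = B.
Proof.
move=> cf cg.
have eqd : forall x, dist rho x A = dist rho x B.
  move=> x; apply: contrapT => neq.
  set a := dist rho x A; set b := dist rho x B.
  have e0 : 0 < `|a - b| / 2.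
    by rewrite divr_gt0 // normr_gt0 subr_eq0; apply/eqP.
  apply: (@dens_contra _ _ _ (proj1 hf) (proj1 hg) _ _ _ (cf x _ e0) (cg x _ e0)).
  move=> k; set y := dist rho x (Ak k).
  have t : `|a - b| <= `|y - a| + `|y - b|.
    by rewrite -(normrN (y - a)); apply: le_trans (ler_normD _ _); rewrite le_eqVlt; apply/orP; left; apply/eqP; congr `|_|; ring.
  case: (lerP (`|a - b| / 2) `|y - a|) => //= h1.
  rewrite leNgt; apply/negP => h2; lra.
apply/seteqP; split => x Hx.
- by apply: (@dist0_in _ _ _ _ _ hB); rewrite -eqd (@dist_in _ _ _ hrho _ _ hA).
- by apply: (@dist0_in _ _ _ _ _ hA); rewrite eqd (@dist_in _ _ _ hrho _ _ hB).
Qed.
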